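(* Consider generating measures $\mathcal{W}_1(P, \ell)$ and $\mathcal{W}_k(P, \ell)$, which are parameterized by the same probability matrix $P$ and lengths $\ell$ but different recursion depths. Let graphs $H_1, \ldots, H_k \sim \mathcal{W}_1(P, \ell)$ be independently drawn, and denote $H_i = (V, E_i)$, with nodes labelled arbitrarily. Then the intersection graph $G = (V, \cap_{i=1}^{k} E_i) = (V, E_G) \sim \mathcal{W}_k(P, \ell)$.
   Context: Multifractal network generator (MFNG): a generating measure $\mathcal{W}_k(P, \ell)$ consists of an $m$-vector of lengths $\ell$ with $\sum_{i=1}^m \ell_i = 1$, a symmetric $m \times m$ matrix $P = (p_{ij})$ with entries in $[0,1]$, and a recursion depth $k$. The indices $1,\ldots,m$ are called categories. An undirected graph $G=(V,E)$ on $N$ nodes is distributed according to $\mathcal{W}_k(P,\ell)$ if it is generated as follows: (1) partition $[0,1]$ into $m$ subintervals of lengths $\ell_1,\ldots,\ell_m$, and recursively partition each subinterval into $m$ pieces with relative lengths $\ell_i$, to depth $k$, giving $m^k$ intervals $\ell_{i_1,\ldots,i_k}$ of length $\prod_{r=1}^k \ell_{i_r}$; (2) sample $N$ points uniformly and independently from $[0,1]$ as the nodes $x_1,\ldots,x_N$, each identified by its $k$-tuple of categories $c(x_i) = (i_1,\ldots,i_k)$ according to which nested intervals it falls into; (3) for every pair of nodes with category tuples $(i_1,\ldots,i_k)$ and $(j_1,\ldots,j_k)$, independently add the edge with probability $\prod_{r=1}^k p_{i_r j_r}$. In particular, a node's category tuple equals $(c_1,\ldots,c_k)$ with probability $\prod_{r=1}^k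 \ell_{c_r}$. *)

(* Defs.v *)
From mathcomp Require Import all_boot all_order all_algebra.
Set Implicit Arguments. Unset Strict Implicit. Unset Printing Implicit Defensive.
Import Order.TTheory GRing.Theory Num.Theory.
Local Open Scope ring_scope.

(* An undirected simple graph on the node set 'I_N is represented by its edge
   set: a set of pairs (u, v) with u < v (each unordered pair listed once). *)
Definition upper_pairs (N : nat) : {set 'I_N * 'I_N} :=
  [set e : 'I_N * 'I_N | (nat_of_ord e.1 < nat_of_ord e.2)%N].

Definition cat_tuple (m k : nat) := {ffun 'I_k -> 'I_m}.

Definition edge_prob (R : ringType) (m k : nat) (P : 'M[R]_m)
  (a b : cat_tuple m k) : R :=
  \prod_(r < k) P (a r) (b r).

Definition tuple_prob (R : ringType) (m k : nat) (ell : 'I_m -> R)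
  (a : cat_tuple m k) : R :=
  \prod_(r < k) ell (a r).

Definition mfng_law (R : ringType) (m k N : nat) (P : 'M[R]_m)
  (ell : 'I_m -> R) (g : {set 'I_N * 'I_N}) : R :=
  if g \subset upper_pairs N then
    \sum_(c : {ffun 'I_N -> cat_tuple m k})
      (\prod_(v : 'I_N) tuple_prob ell (c v)) *
      \prod_(e in upper_pairs N)
        (if e \in g then edge_prob P (c e.1) (c e.2)
         else 1 - edge_prob P (c e.1) (c e.2))
  else 0.

Definition intersection_law (R : ringType) (m k N : nat) (P : 'M[R]_m)
  (ell : 'I_m -> R) (g : {set 'I_N * 'I_N}) : R :=
  \sum_(H : {ffun 'I_k -> {set 'I_N * 'I_N}} | (\bigcap_(j < k) H j) == g)
    \prod_(j < k) mfng_law 1 P ell (H j).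

(* Main.v *)
Require Import Defs.
From mathcomp Require Import all_boot all_order all_algebra.
Import Order.TTheory GRing.Theory Num.Theory.
Local Open Scope ring_scope.

Definition zf (R : nzRingType) (inU : bool) (q : R) (b : bool) : R :=
  if inU then (if b then q else 1 - q) else (if b then 0 else 1).
Arguments zf {R}.

Lemma sum_bits (R : comNzRingType) k (q : 'I_k -> R) :
  \sum_(x : {ffun 'I_k -> bool}) \prod_j (if x j then q j else 1 - q j) = 1.
Proof.
rewrite -(bigA_distr_bigA (fun j (b : bool) => if b then q j else 1 - q j)).
apply: big1 => j _.
by rewrite big_bool /= addrC subrK.
Qed.

Arguments sum_bits {R k}.

Lemma edge_sum (R : comNzRingType) k (Hk : (0 < k)%N) (q : 'I_k -> R)
  (inU ing : bool) (Hg : ing -> inU) :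
  \sum_(x : {ffun 'I_k -> bool})
     ((([forall j, x j] == ing) : bool)%:R * \prod_j zf inU (q j) (x j))
  = if inU then (if ing then \prod_j q j else 1 - \prod_j q j) else 1.
Proof.
case: inU Hg => Hg.
  have Hne : forall x : {ffun 'I_k -> bool}, x != [ffun => true] ->
      [forall j, x j] = false.
    move=> x Hx; apply/negbTE; apply: contra Hx => /forallP Hx.
    by apply/eqP/ffunP => j; rewrite ffunE Hx.
  have Ht : [forall j, ([ffun => true] : {ffun 'I_k -> bool}) j].
    by apply/forallP => j; rewrite ffunE.
  have Hs := sum_bits q; rewrite (bigD1 [ffun => true]) //= in Hs.
  rewrite (bigD1 [ffun => true]) //= Ht.
  have Hp : \prod_j (if ([ffun=> true] : {ffun 'I_k -> bool}) j then q j
                      else 1 - q j) = \prod_j q j.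
    by apply: eq_bigr => j _; rewrite ffunE.
  rewrite Hp in Hs; rewrite Hp.
  have Hr : \sum_(x | x != [ffun=> true])
      ([forall j, x j] == ing)%:R * \prod_j zf true (q j) (x j)
    = (false == ing)%:R * \sum_(x | x != [ffun=> true])
         \prod_j (if x j then q j else 1 - q j).
    by rewrite big_distrr; apply: eq_bigr => x Hx; rewrite Hne.
  rewrite Hr; case: ing {Hg Hr} => /=.
    by rewrite mul0r addr0 mul1r.
  rewrite mul0r add0r mul1r; apply/eqP.
  by rewrite eq_sym subr_eq addrC Hs.
have -> : ing = false by case: ing Hg => // /(_ isT).
have Hf : [forall j, ([ffun => false] : {ffun 'I_k -> bool}) j] = false.
  apply/negbTE/forallPn; exists (Ordinal Hk); by rewrite ffunE.
rewrite (bigD1 [ffun => false]) //= Hf eqxx mul1r.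
rewrite [X in X + _]big1; last by move=> j _; rewrite ffunE.
rewrite big1 ?addr0 //.
move=> x Hx.
have [j Hj] : exists j, x j.
  apply/existsP; apply: contraR Hx => /existsPn Hx.
  by apply/eqP/ffunP => j; rewrite ffunE; apply/negbTE.
by rewrite (bigD1 j) //= /zf Hj mul0r mulr0.
Qed.

Lemma sum_sets (R : comNzRingType) (E : finType) k
  (F : E -> {ffun 'I_k -> bool} -> R) :
  \sum_(H : {ffun 'I_k -> {set E}}) \prod_e F e [ffun j => e \in H j]
  = \prod_e \sum_x F e x.
Proof.
rewrite bigA_distr_bigA.
rewrite (reindex (fun X : {ffun E -> {ffun 'I_k -> bool}} =>
                    [ffun j => [set e | X e j]])) /=.
  apply: eq_bigr => X _; apply: eq_bigr => e _; congr (F e _).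
  by apply/ffunP => j; rewrite !ffunE inE.
exists (fun H : {ffun 'I_k -> {set E}} => [ffun e => [ffun j => e \in H j]]).
  move=> X _; apply/ffunP => e; apply/ffunP => j; by rewrite !ffunE inE.
move=> H _; apply/ffunP => j; apply/setP => e; by rewrite !ffunE inE !ffunE.
Qed.
Lemma ifprod (R : comNzRingType) (T : finType) (b : T -> bool) (X : R) :
  (if [forall e, b e] then X else 0) = (\prod_e ((b e)%:R : R)) * X.
Proof.
case: ifP => [/forallP Hb | /negbT /forallPn [e He]].
  by rewrite big1 ?mul1r // => e _; rewrite Hb.
by rewrite (bigD1 e) //= (negbTE He) mul0r mul0r.
Qed.

Theorem lemma1 (R : realFieldType) (m k N : nat) (P : 'M[R]_m)
  (ell : 'I_m -> R)
  (HPsym : forall i j, P i j = P j i)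
  (HP01 : forall i j, 0 <= P i j <= 1)
  (Hell0 : forall i, 0 <= ell i)
  (Hell1 : \sum_(i < m) ell i = 1)
  (Hk : (0 < k)%N) :
  forall g : {set 'I_N * 'I_N},
    intersection_law k P ell g = mfng_law k P ell g.
Proof.
move=> g.
have [gU | gnU] := boolP (g \subset upper_pairs N); last first.
  rewrite [RHS]/mfng_law (negbTE gnU) /intersection_law.
  apply: big1 => H /eqP HG.
  rewrite (bigD1 (Ordinal Hk)) //= {1}/mfng_law.
  have -> : (H (Ordinal Hk) \subset upper_pairs N) = false.
    apply/negbTE; apply: contra gnU => HU; apply: subset_trans HU.
    by apply/subsetP => e; rewrite -HG => /bigcapP; apply.
  by rewrite mul0r.
rewrite [RHS]/mfng_law gU.
pose a (c : {ffun 'I_N -> Defs.cat_tuple m 1}) := \prod_v tuple_prob ell (c v).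
pose q (C : {ffun 'I_k -> {ffun 'I_N -> Defs.cat_tuple m 1}}) j (e : 'I_N * 'I_N)
  := edge_prob P (C j e.1) (C j e.2).
pose z (c : {ffun 'I_N -> Defs.cat_tuple m 1}) (e : 'I_N * 'I_N) (b : bool) :=
  zf (e \in upper_pairs N) (edge_prob P (c e.1) (c e.2)) b.
have M1 : forall h, mfng_law 1 P ell h = \sum_c a c * \prod_e z c e (e \in h).
  move=> h; rewrite /mfng_law; case: ifP => hU.
    apply: eq_bigr => c _; congr (_ * _); rewrite big_mkcond /=.
    apply: eq_bigr => e _; rewrite /z /zf; case: ifP => eU //.
    case eh: (e \in h) => //; have := subsetP hU e eh; by rewrite eU.
  symmetry; apply: big1 => c _.
  have /subsetPn [e eh eU] := negbT hU.
  by rewrite (bigD1 e) //= /z /zf (negbTE eU) eh mul0r mulr0.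
have HI : forall H : {ffun 'I_k -> {set 'I_N * 'I_N}},
    (\bigcap_(j < k) H j == g) = [forall e, [forall j, e \in H j] == (e \in g)].
  move=> H; apply/eqP/forallP => [<- e | He].
    apply/eqP; apply/forallP/bigcapP => [Hj j _ | Hj j]; [exact: Hj | exact: Hj].
  apply/setP => e; have /eqP <- := He e.
  by apply/bigcapP/forallP => [Hj j | Hj j _]; [exact: Hj | exact: Hj].
transitivity (\sum_(C : {ffun 'I_k -> {ffun 'I_N -> Defs.cat_tuple m 1}})
   (\prod_j a (C j)) * \prod_(e in upper_pairs N)
      (if e \in g then \prod_j q C j e else 1 - \prod_j q C j e)).
  rewrite /intersection_law big_mkcond /=.
  transitivity (\sum_(H : {ffun 'I_k -> {set 'I_N * 'I_N}})
    \sum_(C : {ffun 'I_k -> {ffun 'I_N -> Defs.cat_tuple m 1}})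
      (\prod_j a (C j)) * \prod_e
        ((([forall j, [ffun j => e \in H j] j] == (e \in g)) : bool)%:R *
          \prod_j zf (e \in upper_pairs N) (q C j e) ([ffun j => e \in H j] j))).
    apply: eq_bigr => H _; rewrite HI ifprod.
    rewrite (eq_bigr _ (fun j _ => M1 (H j))).
    rewrite (bigA_distr_bigA (fun j c => a c * \prod_e z c e (e \in H j))).
    rewrite big_distrr; apply: eq_bigr => C _ /=.
    rewrite big_split /= mulrCA; congr (_ * _).
    rewrite [X in _ * X]exchange_big -big_split /=.
    apply: eq_bigr => e _; congr (_ * _).
      by congr (_%:R); congr (_ == _); apply: eq_forallb => j; rewrite ffunE.
    by apply: eq_bigr => j _; rewrite ffunE.
  rewrite exchange_big; apply: eq_bigr => C _ /=.
  rewrite -big_distrr /=.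
  rewrite (@sum_sets _ _ _ (fun e x => (([forall j, x j] == (e \in g)) : bool)%:R *
          \prod_j zf (e \in upper_pairs N) (q C j e) (x j))).
  congr (_ * _); rewrite [RHS]big_mkcond /=; apply: eq_bigr => e _.
  apply: edge_sum => //; exact: (subsetP gU).
pose phi (C : {ffun 'I_k -> {ffun 'I_N -> Defs.cat_tuple m 1}}) :
  {ffun 'I_N -> Defs.cat_tuple m k} := [ffun v => [ffun r => C r v ord0]].
rewrite [RHS](reindex phi) /=; last first.
  exists (fun c : {ffun 'I_N -> Defs.cat_tuple m k} =>
            [ffun r => [ffun v => [ffun _ : 'I_1 => c v r]]]).
    move=> C _; apply/ffunP => r; apply/ffunP => v; apply/ffunP => i.
    by rewrite !ffunE (ord1 i).
  by move=> c _; apply/ffunP => v; apply/ffunP => r; rewrite !ffunE.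
apply: eq_bigr => C _; congr (_ * _).
  rewrite exchange_big; apply: eq_bigr => v _; rewrite /tuple_prob.
  by apply: eq_bigr => j _; rewrite big_ord1 !ffunE.
apply: eq_bigr => e _.
have -> : \prod_j q C j e = edge_prob P (phi C e.1) (phi C e.2).
  apply: eq_bigr => j _; by rewrite /q /edge_prob big_ord1 !ffunE.
by [].
Qed.
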